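(* Let $(X,\mathcal T,P,\leq,\{\sigma_x:x\in X\})$ be a typed topological space with $X$ finite, and let $p\in P$. A set $D\subseteq X$ is $p$-closure connected if and only if for any two points $z,w\in D$ there exists a sequence $z=w_1,w_2,\dots,w_t=w$ with each $w_i\in D$ and $p\vdash tr(\{w_i\})\cap p\vdash tr(\{w_{i+1}\})\neq\emptyset$ for all $i=1,\dots,t-1$.
   Context: A typed topological space $(X,\mathcal T,P,\leq,\{\sigma_x:x\in X\})$ consists of a topological space $(X,\mathcal T)$, a partially ordered set $(P,\leq)$ of types, and for each $x\in X$ a partial function $\sigma_x:\{O\in\mathcal T:x\in O\}\to P$ such that for all $U,V$ in its domain, $\sigma_x(U)\leq\sigma_x(V)$ iff $U\subseteq V$. $U$ is a type-$p$ neighborhood of $x$ if $U$ is in the domain of $\sigma_x$ and $\sigma_x(U)=p$. $x$ is a $p$-accumulation point of $A$ if every type-$p$ neighborhood of $x$ meets $A$. $p\vdash CL_1(A)=A\cup\{p\text{-accumulation points of }A\}$, $p\vdash CL_n(A)=p\vdash CL_1(p\vdash CL_{n-1}(A))$, $p\vdash tr(A)=\bigcup_{n\ge1}p\vdash CL_n(A)$. Two sets $D,D'\subseteq X$ are $p$-closure disjoint if $p\vdash tr(D)\cap p\vdash tr(D')=\emptyset$. A set $D\subseteq X$ is $p$-closure connected if it cannot be partitioned into two non-empty subsets $E,E'$ that are $p$-closure disjoint. *)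

(* Defs.v *)
From HB Require Import structures.
From mathcomp Require Import all_boot all_order.
Set Implicit Arguments. Unset Strict Implicit. Unset Printing Implicit Defensive.
Import Order.Theory.
Local Open Scope order_scope.

Section TypedTop.
Variable X : finType.

Definition is_topology (T : pred {set X}) : Prop :=
  [/\ T set0, T setT,
      (forall F : {set {set X}}, (forall U, U \in F -> T U) ->
          T (\bigcup_(U in F) U))
    & (forall U V, T U -> T V -> T (U :&: V))].

Variables (d : Order.disp_t) (P : porderType d).

(* sigma x is a partial function (None = undefined) on the open
   neighbourhoods of x, with values in P, and order-reflecting/preserving. *)
Definition is_typing (T : pred {set X}) (sigma : X -> {set X} -> option P)
  : Prop :=
  (forall x U q, sigma x U = Some q -> T U /\ x \in U) /\
  (forall x U V p q, sigma x U = Some p -> sigma x V = Some q ->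
       (p <= q) = (U \subset V)).

Variable sigma : X -> {set X} -> option P.

Definition pCL1 (p : P) (A : X -> Prop) : X -> Prop :=
  fun x => A x \/ (forall U, sigma x U = Some p -> exists y, y \in U /\ A y).

(* p |- CL_n (A) for n >= 1: pCLn p n A = CL_{n+1} *)
Fixpoint pCLn (p : P) (n : nat) (A : {set X}) : X -> Prop :=
  match n with
  | 0 => pCL1 p (fun y => y \in A)
  | n'.+1 => pCL1 p (pCLn p n' A)
  end.

Definition ptr (p : P) (A : {set X}) (x : X) : Prop :=
  exists n, pCLn p n A x.

Definition closure_disjoint (p : P) (D D' : {set X}) : Prop :=
  ~ (exists x, ptr p D x /\ ptr p D' x).

Definition closure_connected (p : P) (D : {set X}) : Prop :=
  ~ (exists E E' : {set X},
        [/\ E != set0, E' != set0, E :|: E' = D, E :&: E' = set0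
          & closure_disjoint p E E']).

End TypedTop.

(* Main.v *)
Require Import Defs.
From HB Require Import structures.
From mathcomp Require Import all_boot all_order.
From Stdlib Require Import Classical ClassicalEpsilon.
Import Order.Theory.
Local Open Scope order_scope.

Section Aux.
Variables (X : finType) (d : Order.disp_t) (P : porderType d)
  (sigma : X -> {set X} -> option P) (p : P).
Hypothesis huniq : forall x U V, sigma x U = Some p -> sigma x V = Some p -> U = V.

Lemma CLn_mono n (A B : {set X}) x : A \subset B -> pCLn sigma p n A x -> pCLn sigma p n B x.
Proof.
move=> AB; elim: n x => [|n IH] x /=; rewrite /pCL1.
  case => [Ax|H]; [left; exact: (subsetP AB _ Ax)|right => U hU].
  have [y [yU Ay]] := H U hU; exists y; split => //; exact: (subsetP AB).
case => [h|H]; [left; exact: IH|right => U hU].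
have [y [yU Ay]] := H U hU; exists y; split => //; exact: IH.
Qed.

Lemma CLn_decomp n (S : {set X}) x : pCLn sigma p n S x ->
  (forall B, pCLn sigma p n B x) \/ exists2 y, y \in S & pCLn sigma p n [set y] x.
Proof.
elim: n x => [|n IH] x /=; rewrite /pCL1.
  case => [xS|H].
    by right; exists x => //; left; rewrite inE.
  case: (classic (exists U, sigma x U = Some p)) => [[U hU]|nU].
    have [y [yU yS]] := H U hU; right; exists y => //; right => U' hU'.
    by rewrite (huniq _ _ _ hU' hU); exists y; split => //; rewrite inE.
  by left => B; right => U hU; exfalso; apply: nU; exists U.
case => [h|H].
  case: (IH x h) => [hB|[y yS hy]]; [left => B; left; exact: hB|right; exists y => //; left => //].
case: (classic (exists U, sigma x U = Some p)) => [[U hU]|nU].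
  have [y [yU yS]] := H U hU; case: (IH y yS) => [hB|[z zS hz]].
    by left => B; right => U' hU'; rewrite (huniq _ _ _ hU' hU); exists y; split => //; exact: hB.
  by right; exists z => //; right => U' hU'; rewrite (huniq _ _ _ hU' hU); exists y; split.
by left => B; right => U hU; exfalso; apply: nU; exists U.
Qed.

End Aux.

Theorem lemma3p7 (X : finType) (T : pred {set X}) (hT : is_topology T)
  (d : Order.disp_t) (P : porderType d)
  (sigma : X -> {set X} -> option P) (hsigma : is_typing T sigma)
  (p : P) (D : {set X}) :
  closure_connected sigma p D <->
  (forall z w, z \in D -> w \in D ->
     exists (t : nat) (f : nat -> X),
       [/\ f 0 = z, f t = w,
           (forall i, i <= t -> f i \in D)
         & (forall i, i < t ->
              exists x, ptr sigma p [set f i] x /\ ptr sigma p [set f i.+1] x)]).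
Proof.
have huniq : forall x U V, sigma x U = Some p -> sigma x V = Some p -> U = V.
  move=> x U V hU hV; have := hsigma.2 x U V p p hU hV; have := hsigma.2 x V U p p hV hU.
  rewrite lexx => h1 h2; apply/eqP; rewrite eqEsubset; by rewrite -h1 -h2.
split.
- move=> hc z w zD wD.
  pose reach w := exists (t : nat) (f : nat -> X),
       [/\ f 0 = z, f t = w, (forall i, (i <= t)%N -> f i \in D)
         & (forall i, (i < t)%N ->
              exists x, ptr sigma p [set f i] x /\ ptr sigma p [set f i.+1] x)].
  suff : reach w by [].
  pose E := [set y in D | if excluded_middle_informative (reach y) then true else false].
  have inE' y : (y \in E) = (y \in D) && (if excluded_middle_informative (reach y) then true else false).
    by rewrite inE.
  have Ez : z \in E.
    rewrite inE zD /=; case: excluded_middle_informative => // [[]].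
    exists 0%N, (fun _ => z); split => // i; rewrite leqn0 => /eqP -> //.
  have wD' := wD.
  case: (boolP (D :\: E == set0)) => [/eqP h0|hne].
    have : w \in D :\: E = false by rewrite h0 inE.
    rewrite !inE wD andbT /=; case: excluded_middle_informative => // r _.
  exfalso; apply: hc; exists E, (D :\: E); split.
  + by apply/set0Pn; exists z.
  + done.
  + by apply/setP => y; rewrite !inE; case: (y \in D); case: excluded_middle_informative.
  + by apply/setP => y; rewrite !inE; case: (y \in D); case: excluded_middle_informative.
  + move=> [x [[n hn] [m hm]]].
    have [y yE hy] : exists2 y, y \in E & ptr sigma p [set y] x.
      case: (@CLn_decomp _ _ _ _ _ huniq _ _ _ hn) => [hB|[y yE hy]]; last by exists y => //; exists n.
      by exists z => //; exists n; apply: hB.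
    have [y' yE' hy'] : exists2 y', y' \in D :\: E & ptr sigma p [set y'] x.
      case: (@CLn_decomp _ _ _ _ _ huniq _ _ _ hm) => [hB|[y' yE' hy']]; last by exists y' => //; exists m.
      have [y' yE'] := set0Pn _ hne.
      by exists y' => //; exists m; apply: hB.
    move: yE'; rewrite !inE => /andP [/negP nE y'D]; apply: nE.
    rewrite y'D /=. case: excluded_middle_informative => // [[]].
    move: yE; rewrite inE => /andP [yD]; case: excluded_middle_informative => // [[t [f [f0 ft fD fl]]]] _.
    exists t.+1, (fun i => if (i <= t)%N then f i else y'); split.
    * by rewrite leq0n.
    * by rewrite ltnn.
    * move=> i; case: ifP => [/fD //|_ _]; exact: y'D.
    * move=> i; rewrite ltnS => hi; rewrite hi; case: ltngtP hi => // [hlt|heq] _.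
        by apply: fl.
      by rewrite heq ft; exists x.
- move=> hch [E [E' [hE hE' hU hI hdisj]]].
  have [z zE] := set0Pn _ hE; have [w wE'] := set0Pn _ hE'.
  have sE : E \subset D by rewrite -hU subsetUl.
  have sE' : E' \subset D by rewrite -hU subsetUr.
  have [t [f [f0 ft fD fl]]] := hch z w (subsetP sE _ zE) (subsetP sE' _ wE').
  have key : forall k, (k <= t)%N -> f k \in E.
    elim => [|k IH] hk; first by rewrite f0.
    have fkE := IH (ltnW hk).
    have : f k.+1 \in D := fD _ hk.
    rewrite -hU inE => /orP [//|h'].
    exfalso; apply: hdisj; have [x [[n hn] [m hm]]] := fl k hk.
    exists x; split.
      by exists n; apply: (@CLn_mono _ _ _ _ _ _ _ _ _ _ hn); rewrite sub1set.
    by exists m; apply: (@CLn_mono _ _ _ _ _ _ _ _ _ _ hm); rewrite sub1set.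
  have := key t (leqnn t); rewrite ft => wE.
  have : w \in E :&: E' by rewrite inE wE wE'.
  by rewrite hI inE.
Qed.
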